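(* For all real $\alpha,\alpha',\beta,\beta'$ with $\beta'\neq0$, every integer $n\ge0$, every integer $0\le k\le n$, and every real $x$, \[ \langle-\alpha-\beta x\rangle_n=\sum_{j=0}^{n}(-1)^jS_{\alpha-\frac{\alpha'}{\beta'}\beta,\ \frac{\beta}{\beta'}}(n,j)\,\langle-\alpha'-\beta'x\rangle_j, \] \[ S_{\alpha,\beta}(n,k)=\sum_{j=k}^{n}(-1)^jS_{\alpha-\frac{\alpha'}{\beta'}\beta,\ \frac{\beta}{\beta'}}(n,j)\,S_{\alpha',\beta'}(j,k). \]
   Context: For real $a$ and integer $n\ge 1$, $\langle a\rangle_n:=a(a+1)\cdots(a+n-1)$ and $\langle a\rangle_0:=1$. For real $\alpha,\beta$ and integers $0\le k\le n$, $S_{\alpha,\beta}(n,k):=\frac{1}{k!}\sum_{j=0}^{k}(-1)^{k-j}\binom{k}{j}\langle-\alpha-\beta j\rangle_n$. *)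

(* Defs.v *)
From HB Require Import structures.
From mathcomp Require Import all_boot all_order all_algebra.
Set Implicit Arguments. Unset Strict Implicit. Unset Printing Implicit Defensive.
Import Order.TTheory GRing.Theory Num.Theory.
Local Open Scope ring_scope.

Definition risef {R : ringType} (a : R) (n : nat) : R :=
  \prod_(i < n) (a + i%:R).

Definition Sab {R : fieldType} (al be : R) (n k : nat) : R :=
  (k`!%:R)^-1 * \sum_(j < k.+1)
     (-1) ^+ (k - j) * ('C(k, j))%:R * risef (- al - be * j%:R) n.

(* Main.v *)
Require Import Defs.
From HB Require Import structures.
From mathcomp Require Import all_boot all_order all_algebra.
From mathcomp Require Import ring zify.
Import Order.TTheory GRing.Theory Num.Theory.
Local Open Scope ring_scope.
Module MA.
Set Implicit Arguments. Unset Strict Implicit.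


Section Dif.
Variable R : fieldType.

Definition dif (k : nat) (g : nat -> R) : R :=
  \sum_(j < k.+1) (-1) ^+ (k - j) * ('C(k, j))%:R * g j.

Lemma sgn_sub (k j : nat) : (j <= k)%N ->
  (-1) ^+ (k - j) = (-1) ^+ k * (-1) ^+ j :> R.
Proof.
move=> jk; rewrite -{2}(subnK jk) exprD -mulrA -exprD addnn.
by rewrite -mul2n exprM sqrrN expr1n expr1n mulr1.
Qed.

Lemma difS k g : dif k g = (-1) ^+ k * \sum_(i < k.+1) ('C(k, i))%:R * ((-1) ^+ i * g i).
Proof.
rewrite /dif mulr_sumr; apply: eq_bigr => i _.
rewrite sgn_sub ?(ltnSE (ltn_ord i)) //; ring.
Qed.

Lemma binL (m : nat) (h : nat -> R) :
  \sum_(j < m.+1) ('C(m, j))%:R * h j =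
  h 0%N + \sum_(j < m.+1) ('C(m, j.+1))%:R * h j.+1.
Proof.
rewrite big_ord_recl big_ord_recr /= bin0 bin_small // mul1r mul0r addr0.
done.
Qed.

Lemma dif0 g : dif 0 g = g 0%N.
Proof. by rewrite /dif big_ord_recl big_ord0 /= bin0 expr0 !mul1r addr0. Qed.

Lemma difSS k g : dif k.+1 g = dif k (fun i => g i.+1) - dif k g.
Proof.
rewrite !difS big_ord_recl /= bin0 mul1r.
rewrite (binL k (fun i => (-1) ^+ i * g i)).
have -> : \sum_(i < k.+1) ('C(k.+1, bump 0 i))%:R * ((-1) ^+ bump 0 i * g (bump 0 i))
  = \sum_(i < k.+1) ('C(k, i))%:R * ((-1) ^+ i.+1 * g i.+1) +
    \sum_(i < k.+1) ('C(k, i.+1))%:R * ((-1) ^+ i.+1 * g i.+1).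
  by rewrite -big_split; apply: eq_bigr => i _; rewrite /bump /= binS natrD; ring.
have -> : \sum_(i < k.+1) ('C(k, i))%:R * ((-1) ^+ i.+1 * g i.+1) =
  - \sum_(i < k.+1) ('C(k, i))%:R * ((-1) ^+ i * g i.+1).
  by rewrite -sumrN; apply: eq_bigr => i _; rewrite exprS; ring.
rewrite exprS; ring.
Qed.

Lemma difB k f g : dif k (fun i => f i - g i) = dif k f - dif k g.
Proof. by rewrite /dif -sumrB; apply: eq_bigr => i _; ring. Qed.

Lemma eq_dif k f g : (forall i, f i = g i) -> dif k f = dif k g.
Proof. by move=> fg; rewrite /dif; apply: eq_bigr => i _; rewrite fg. Qed.

Lemma newton_nat (m : nat) (g : nat -> R) :
  g m = \sum_(j < m.+1) ('C(m, j))%:R * dif j g.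
Proof.
elim: m g => [|m IH] g.
  by rewrite big_ord_recl big_ord0 bin0 mul1r addr0 dif0.
rewrite (IH (fun i => g i.+1)) [in RHS]big_ord_recl /= bin0 mul1r.
have -> : \sum_(j < m.+1) ('C(m, j))%:R * dif j (fun i => g i.+1) =
   \sum_(j < m.+1) ('C(m, j))%:R * dif j.+1 g + \sum_(j < m.+1) ('C(m, j))%:R * dif j g.
  rewrite -big_split /=; apply: eq_bigr => j _.
  rewrite (difSS j g); ring.
rewrite (binL m (fun j => dif j g)) /=.
under [in RHS]eq_bigr => j _ do rewrite /bump /= add1n binS natrD mulrDl.
rewrite big_split /=; ring.
Qed.

End Dif.

End MA.
Import MA.
Module MB.


Section P.
Variable R : realFieldType.

Lemma dif_poly k (p : {poly R}) : (size p <= k)%N -> dif k (fun i => p.[i%:R]) = 0.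
Proof.
elim: k p => [|k IH] p hp.
  have -> : p = 0 by apply/eqP; rewrite -size_poly_eq0 -leqn0.
  by rewrite dif0 horner0.
set q := p \Po ('X + 1%:P) - p.
rewrite difSS -difB (@eq_dif _ _ _ (fun i => q.[i%:R])); last first.
  by move=> i; rewrite /q hornerD hornerN horner_comp !hornerE -natr1.
apply: IH; apply/leq_sizeP => j hj.
have s2 : size (p \Po ('X + 1%:P)) = size p by rewrite size_comp_poly2 // size_XaddC.
rewrite /q coefB.
case: (leqP (size p) j) => hj2.
  by rewrite !nth_default ?s2 // subr0.
have ej : j = (size p).-1 by lia.
rewrite ej -/(lead_coef p) -s2 -/(lead_coef _) lead_coef_comp ?size_XaddC //.
by rewrite lead_coefXaddC expr1n mulr1 subrr.
Qed.


Lemma size_prod2 (F : nat -> {poly R}) k : (forall i, (size (F i) <= 2)%N) ->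
  (size (\prod_(i < k) F i)%R <= k.+1)%N.
Proof.
move=> hF; elim: k => [|k IH]; first by rewrite big_ord0 size_poly1.
have -> : \prod_(i < k.+1) F i = (\prod_(i < k) F i) * F k by rewrite big_ord_recr.
apply: (leq_trans (size_polyMleq _ _)).
move: (hF k) IH; generalize (size (F k)); generalize (size (\prod_(i < k) F i)%R); lia.
Qed.

Lemma ffR_nat (i k : nat) : \prod_(j < k) (i%:R - j%:R) = (i ^_ k)%:R :> R.
Proof.
elim: k => [|k IH]; first by rewrite big_ord0 ffactn0.
rewrite big_ord_recr /= IH ffactnSr natrM.
case: (leqP k i) => hk; first by rewrite natrB.
by rewrite ffact_small // !mul0r.
Qed.

Lemma newton_poly (p : {poly R}) m : (size p <= m.+1)%N -> forall x,
  p.[x] = \sum_(k < m.+1) (k`!%:R)^-1 * dif k (fun i => p.[i%:R]) * \prod_(i < k) (x - i%:R).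
Proof.
move=> hp.
set N := \sum_(k < m.+1) ((k`!%:R)^-1 * dif k (fun i => p.[i%:R])) *: \prod_(i < k) ('X - (i%:R)%:P).
suff eN : p = N.
  move=> x; rewrite {1}eN horner_sum; apply: eq_bigr => k _.
  rewrite hornerZ horner_prod; congr (_ * _); apply: eq_bigr => i _.
  by rewrite hornerXsubC.
have hN : (size N <= m.+1)%N.
  apply: (big_ind (fun q : {poly R} => (size q <= m.+1)%N)).
  - by rewrite size_poly0.
  - by move=> a b ha hb; apply: (leq_trans (size_polyD _ _)); rewrite geq_max ha hb.
  - move=> k _; apply: (leq_trans (size_scale_leq _ _)).
    apply: (leq_trans (size_prod2 (fun i : nat => 'X - (i%:R)%:P) k _)); last exact: ltn_ord.
    by move=> i; rewrite size_XsubC.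
apply/eqP; rewrite -subr_eq0; apply/negPn/negP => nz.
have hs : (size (p - N)%R <= m.+1)%N.
  by apply: (leq_trans (size_polyD _ _)); rewrite size_polyN geq_max hp hN.
have hu : uniq (map (fun i : nat => i%:R : R) (iota 0 m.+1)).
  by rewrite map_inj_uniq ?iota_uniq // => a b /eqP; rewrite eqr_nat => /eqP.
suff hall : all (root (p - N)) (map (fun i : nat => i%:R : R) (iota 0 m.+1)).
  by have := max_poly_roots nz hall hu; rewrite size_map size_iota ltnNge hs.
apply/allP => y /mapP [i]; rewrite mem_iota add0n => /andP [_ hi] ->.
rewrite /root hornerD hornerN subr_eq0; apply/eqP.
rewrite horner_sum (newton_nat i (fun j => p.[j%:R])).
rewrite (big_ord_widen _ (fun j:nat => 'C(i, j)%:R * dif j (fun l => p.[l%:R])) hi) big_mkcond; apply: eq_bigr => k _.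
rewrite hornerZ horner_prod.
under eq_bigr => j _ do rewrite hornerXsubC.
rewrite ffR_nat -bin_ffact natrM.
have kf : (k`!%:R : R) != 0 by rewrite pnatr_eq0 -lt0n fact_gt0.
case: ifP => hk; first by field.
by rewrite bin_small ?mul0r ?mulr0 // ltnNge -ltnS hk.
Qed.
End P.

End MB.
Import MB.
Module MC.


Section M.
Variable R : realFieldType.

Definition Prise (a b : R) n : {poly R} :=
  \prod_(i < n) ((- b)%:P * 'X + (- a + i%:R)%:P).

Lemma Prise_eval a b n t : (Prise a b n).[t] = risef (- a - b * t) n.
Proof.
rewrite /Prise /risef horner_prod; apply: eq_bigr => i _.
rewrite hornerD hornerM hornerX !hornerC; ring.
Qed.

Lemma Prise_size a b n : (size (Prise a b n) <= n.+1)%N.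
Proof.
apply: (@size_prod2 R (fun i : nat => (- b)%:P * 'X + (- a + i%:R)%:P)) => i.
apply: (leq_trans (size_polyD _ _)); rewrite geq_max; apply/andP; split.
  apply: (leq_trans (size_polyMleq _ _)); rewrite size_polyX.
  by move: (size_polyC_leq1 (- b)); case: (size (- b)%:P) => [|[|s]].
by apply: (leq_trans (size_polyC_leq1 _)).
Qed.

Lemma Sab_dif (a b : R) n k :
  Sab a b n k = (k`!%:R)^-1 * dif k (fun i => (Prise a b n).[i%:R]).
Proof.
rewrite /Sab; congr (_ * _); apply: eq_bigr => i _; by rewrite Prise_eval.
Qed.

Lemma ffR_neg (t : R) k : \prod_(i < k) (t - i%:R) = (-1) ^+ k * risef (- t) k.
Proof.
elim: k => [|k IH]; first by rewrite /risef !big_ord0 expr0 mul1r.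
rewrite /risef !big_ord_recr /= -/(risef _ _) IH exprS; ring.
Qed.

Lemma newton_rise (a b : R) n t :
  risef (- a - b * t) n = \sum_(k < n.+1) Sab a b n k * \prod_(i < k) (t - i%:R).
Proof.
rewrite -Prise_eval (@newton_poly R _ _ (Prise_size a b n)); apply: eq_bigr => k _.
by rewrite Sab_dif.
Qed.

Lemma dif_sum k N (F : nat -> nat -> R) :
  dif k (fun i => \sum_(j < N) F j i) = \sum_(j < N) dif k (F j).
Proof.
rewrite /dif; under eq_bigr do rewrite mulr_sumr.
by rewrite exchange_big.
Qed.

Lemma dif_scale k a (f : nat -> R) : dif k (fun i => a * f i) = a * dif k f.
Proof. by rewrite /dif mulr_sumr; apply: eq_bigr => i _; ring. Qed.

End M.


End MC.
Import MC.

Theorem mainTheorem15 (R : realFieldType) (al al' be be' : R) (hbe' : be' != 0)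
  (n : nat) :
  (forall x : R,
     risef (- al - be * x) n =
     \sum_(j < n.+1) (-1) ^+ j * Sab (al - al' / be' * be) (be / be') n j
                     * risef (- al' - be' * x) j) /\
  (forall k : nat, (k <= n)%N ->
     Sab al be n k =
     \sum_(k <= j < n.+1) (-1) ^+ j * Sab (al - al' / be' * be) (be / be') n j
                          * Sab al' be' j k).
Proof.
have P1 : forall x : R,
     risef (- al - be * x) n =
     \sum_(j < n.+1) (-1) ^+ j * Sab (al - al' / be' * be) (be / be') n j
                     * risef (- al' - be' * x) j.
  move=> x.
  have -> : - al - be * x = - (al - al' / be' * be) - (be / be') * (al' + be' * x).
    by field.
  rewrite newton_rise; apply: eq_bigr => j _.
  rewrite ffR_neg.
  have -> : - (al' + be' * x) = - al' - be' * x by ring.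
  ring.
split => // k kn.
set S' := Sab (al - al' / be' * be) (be / be') n.
have -> : Sab al be n k = (k`!%:R)^-1 * dif k (fun i => risef (- al - be * i%:R) n) by [].
rewrite (@eq_dif R k _ _ (fun i => P1 i%:R)) (@dif_sum R k n.+1 (fun j i => (-1) ^+ j * S' j * risef (- al' - be' * i%:R) j)).
have hd : forall j, dif k (fun i => (-1) ^+ j * S' j * risef (- al' - be' * i%:R) j) =
   (-1) ^+ j * S' j * dif k (fun i => risef (- al' - be' * i%:R) j).
  by move=> j; rewrite -dif_scale.
under eq_bigr => j _ do rewrite hd.
rewrite mulr_sumr -(big_mkord xpredT (fun j => (k`!%:R)^-1 *
   ((-1) ^+ j * S' j * dif k (fun i => risef (- al' - be' * i%:R) j)))).
rewrite (@big_cat_nat _ _ _ k 0 n.+1) //=; last by apply: leqW.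
rewrite big1_seq ?add0r; last first.
  move=> j; rewrite mem_index_iota => /andP [_ jk].
  rewrite (@eq_dif R k _ (fun i => (Prise R al' be' j).[i%:R] : R)); last by move=> i; rewrite (@Prise_eval R).
  by rewrite dif_poly ?mulr0 // (leq_trans (@Prise_size R _ _ _)).
by apply: eq_bigr => j _; rewrite /Sab /dif; ring.
Qed.
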